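(* Let $n\in\mathbb{N}$ and $a\in\mathbb{R}$ with $|a|>5$. Let $\tilde{E}_n(a,1)$ be the $(n+1)\times n$ matrix whose $(i,j)$ entry is $a$ if $i=j$, $1$ if $j=i+1$, $a$ if $i=j+1$, $1$ if $i=j+2$, and $0$ otherwise, and let $\tilde{B}_n(a,1)$ be the $(n+3)\times n$ matrix whose first row is $(1,0,\dots,0)$, whose rows $2,\dots,n+2$ are the rows of $\tilde{E}_n(a,1)$ in order, and whose last row is $(0,\dots,0,1)$. Then the columns of $\tilde{B}_n(a,1)$ are linearly independent, and every non-zero linear combination of these columns has at least $4$ non-zero entries. *)

(* Defs.v *)
From mathcomp Require Import all_boot all_order all_algebra.
From mathcomp Require Import reals.
Set Implicit Arguments. Unset Strict Implicit. Unset Printing Implicit Defensive.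
Import Order.TTheory GRing.Theory Num.Theory.
Local Open Scope ring_scope.

(* Indices are 0-based: row i : 'I_(n+1), column j : 'I_n correspond to the
   paper's i+1, j+1; the relations i=j, j=i+1, i=j+1, i=j+2 are shift-invariant. *)
Definition Etilde (R : nzRingType) (n : nat) (a : R) : 'M[R]_(n.+1, n) :=
  \matrix_(i < n.+1, j < n)
    if (i == j :> nat) then a
    else if (j == i.+1 :> nat) then 1
    else if (i == j.+1 :> nat) then a
    else if (i == j.+2 :> nat) then 1
    else 0.

Definition Btilde (R : nzRingType) (n : nat) (a : R) : 'M[R]_(n.+3, n) :=
  \matrix_(i < n.+3, j < n)
    if (i == 0%N :> nat) then (j == 0%N :> nat)%:R
    else if (i == n.+2 :> nat) then (j == n.-1 :> nat)%:R
    else Etilde n a (inord i.-1) j.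

(* Main.v *)
Require Import Defs.
From mathcomp Require Import all_boot all_order all_algebra.
From mathcomp Require Import reals.
From mathcomp Require Import zify ring lra.
Import Order.TTheory GRing.Theory Num.Theory.
Local Open Scope ring_scope.
Set Implicit Arguments. Unset Strict Implicit. Unset Printing Implicit Defensive.

Lemma Bentry (R : nzRingType) n (a : R) (i : 'I_n.+3) (j : 'I_n) :
  Btilde n a i j = (j + 3 == i)%N%:R + a * (j + 2 == i)%N%:R
                   + a * (j + 1 == i)%N%:R + (j == i :> nat)%:R.
Proof.
case: i j => [i hi] [j hj]; rewrite /Btilde /Etilde !mxE /=.
case: (i =P 0%N) => [->|i0].

  case: j hj => [|j] hj /=; first by rewrite !mulr0 !addr0 ?add0r.
  by rewrite !mulr0 !addr0 ?add0r.
case: (i =P n.+2) => [->|i1].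
  have -> : (j + 2 == n.+2)%N = false by lia.
  have -> : (j + 1 == n.+2)%N = false by lia.
  have -> : (j == n.+2)%N = false by lia.
  rewrite !mulr0 !addr0.
  by have -> : (j == n.-1) = (j + 3 == n.+2)%N by apply/eqP/eqP; lia.
rewrite inordK; last by lia.
case: (i.-1 =P j) => [e|e].
  have -> : (j + 2 == i)%N = false by lia.
  have -> : (j + 1 == i)%N = true by lia.
  have -> : (j + 3 == i)%N = false by lia.
  have -> : (j == i) = false by apply/eqP; lia.
  by rewrite !mulr0 ?mulr1 ?add0r ?addr0.
case: (j =P i.-1.+1) => [e2|e2].
  have -> : (j + 2 == i)%N = false by lia.
  have -> : (j + 1 == i)%N = false by lia.
  have -> : (j + 3 == i)%N = false by lia.
  have -> : (j == i) = true by apply/eqP; lia.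
  by rewrite !mulr0 ?add0r ?addr0.
case: (i.-1 =P j.+1) => [e3|e3].
  have -> : (j + 2 == i)%N = true by lia.
  have -> : (j + 1 == i)%N = false by lia.
  have -> : (j + 3 == i)%N = false by lia.
  have -> : (j == i) = false by apply/eqP; lia.
  by rewrite !mulr0 ?mulr1 ?add0r ?addr0.
have -> : (j + 2 == i)%N = false by lia.
have -> : (j + 1 == i)%N = false by lia.
have -> : (j == i) = false by apply/eqP; lia.
rewrite !mulr0 !addr0.
have -> : (j + 3 == i)%N = (i.-1 == j.+2).
  apply/idP/idP => /eqP H; apply/eqP.
 lia. lia. by case: (_ == _).
Qed.
Definition vv (R : realType) n (v : 'cV[R]_n) (k : nat) : R :=
  \sum_(j < n) (j == k :> nat)%:R * v j ord0.
Definition gg (R : realType) n (v : 'cV[R]_n) (k : nat) : R :=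
  if (3 <= k)%N then vv v (k - 3) else 0.
Definition pp (R : realType) n (a : R) (v : 'cV[R]_n) (k : nat) : R :=
  gg v k + a * gg v k.+1 + a * gg v k.+2 + gg v k.+3.

Lemma sum_shift (R : realType) n (v : 'cV[R]_n) c i :
  \sum_(j < n) (j + c == i)%N%:R * v j ord0 = if (c <= i)%N then vv v (i - c) else 0.
Proof.
case: leqP => h.
  rewrite /vv; apply: eq_bigr => j _.
  by have -> : (j + c == i)%N = (j == (i - c)%N :> nat) by apply/eqP/eqP; lia.
apply: big1 => j _.
have -> : (j + c == i)%N = false by apply/eqP; lia.
by rewrite mul0r.
Qed.

Lemma Bv (R : realType) n (a : R) (v : 'cV[R]_n) (i : 'I_n.+3) :
  (Btilde n a *m v) i ord0 = pp a v i.
Proof.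
rewrite mxE.
have E : forall j : 'I_n, Btilde n a i j * v j ord0 =
  (j + 3 == i)%N%:R * v j ord0 + a * ((j + 2 == i)%N%:R * v j ord0)
  + a * ((j + 1 == i)%N%:R * v j ord0) + (j + 0 == i)%N%:R * v j ord0.
  by move=> j; rewrite Bentry addn0; ring.
rewrite (eq_bigr _ (fun j _ => E j)) !big_split /= -!mulr_sumr !sum_shift.
rewrite /pp /gg /= !subn0.
clear E; by case: i => [[|[|[|i]]] hi].
Qed.

Lemma vv_ge (R : realType) n (v : 'cV[R]_n) k : (n <= k)%N -> vv v k = 0.
Proof.
move=> h; apply: big1 => j _.
have -> : (j == k :> nat) = false by apply/eqP; have := ltn_ord j; lia.
by rewrite mul0r.
Qed.

Lemma vv_lt (R : realType) n (v : 'cV[R]_n) k (h : (k < n)%N) :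
  vv v k = v (Ordinal h) ord0.
Proof.
rewrite /vv (bigD1 (Ordinal h)) //= eqxx mul1r big1 ?addr0 // => j hj.
have -> : (j == k :> nat) = false; last by rewrite mul0r.
by apply/negbTE; apply: contra hj => /eqP e; apply/eqP; apply: val_inj.
Qed.

Lemma exmax (R : realType) (F : nat -> R) N :
  exists j, (j <= N)%N /\ forall k, (k <= N)%N -> F k <= F j.
Proof.
elim: N => [|N [j [hj hk]]].
  by exists 0%N; split => // k; rewrite leqn0 => /eqP ->.
case: (leP (F N.+1) (F j)) => h.
  exists j; split; first by lia.
  move=> k; rewrite leq_eqVlt ltnS => /orP [/eqP ->|] //; exact: hk.
exists N.+1; split => // k; rewrite leq_eqVlt ltnS => /orP [/eqP ->|] // /hk hk'.
by apply: le_trans hk' _; apply: ltW.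
Qed.

Lemma tele (R : realType) (f : nat -> R) K :
  \sum_(i < K) (-1) ^+ i * (f i + f i.+1) = f 0%N - (-1) ^+ K * f K.
Proof.
elim: K => [|K IH]; first by rewrite big_ord0 expr0 mul1r subrr.
rewrite big_ord_recr /= IH exprS; ring.
Qed.

Lemma sum_pick (R : realType) m (x : 'I_m) (F : 'I_m -> R) :
  \sum_(i < m) (i == x)%:R * F i = F x.
Proof.
rewrite (bigD1 x) //= eqxx mul1r big1 ?addr0 // => i /negbTE ->.
by rewrite mul0r.
Qed.
Lemma g_lt3 (R : realType) n (v : 'cV[R]_n) k : (k < 3)%N -> gg v k = 0.
Proof. by move=> h; rewrite /gg leqNgt h. Qed.

Lemma g_ge (R : realType) n (v : 'cV[R]_n) k : (n + 3 <= k)%N -> gg v k = 0.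
Proof. by move=> h; rewrite /gg; case: ifP => // _; apply: vv_ge; lia. Qed.

Lemma part2 (R : realType) (n : nat) (a : R) (ha : 5 < `|a|) (v : 'cV[R]_n) :
  v != 0 -> (4 <= #|[set i : 'I_n.+3 | (Btilde n a *m v) i ord0 != 0%R]|)%N.
Proof.
move=> v0.
have : [exists j : 'I_n, v j ord0 != 0].
  apply: contraR v0 => /existsPn H; apply/eqP/matrixP => i k.
  by rewrite !mxE (ord1 k); apply/eqP/negPn/H.
move/existsP => [j0 hj0].
have gj : gg v (j0 + 3)%N != 0.
  rewrite /gg leq_addl addnK (vv_lt _ (ltn_ord j0)).
  by have -> : Ordinal (ltn_ord j0) = j0 by apply: val_inj.
have exG : exists k, gg v k != 0 by exists (j0 + 3)%N.
have ubG : forall k, gg v k != 0 -> (k <= n.+2)%N.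
  move=> k; apply: contraTT; rewrite -ltnNge => h.
  by rewrite negbK g_ge //; lia.
case: (ex_minnP exG) => s gs smin.
case: (ex_maxnP exG ubG) => t gt tmax.
have s3 : (3 <= s)%N by case: leqP gs => // h; rewrite g_lt3 ?eqxx.
have tn : (t <= n.+2)%N by apply: ubG.
have st : (s <= t)%N by apply: tmax.
have gbelow : forall k, (k < s)%N -> gg v k = 0.
  move=> k hk; apply/eqP; apply: contraTT hk => /smin; lia.
have gabove : forall k, (t < k)%N -> gg v k = 0.
  move=> k hk; apply/eqP; apply: contraTT hk => /tmax; lia.
pose u := fun k => gg v k + gg v k.+1.
have [j [hjN hjmax]] := exmax (fun k => `|u k|) n.+3.
have umax : forall k, `|u k| <= `|u j|.
  move=> k; case: (leqP k n.+3) => hk; first exact: hjmax.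
  rewrite /u (gabove k) ?(gabove k.+1) ?addr0 ?normr0 //; lia.
pose M := `|u j|.
have us : u (s - 1)%N = gg v s.
  rewrite /u gbelow; last by lia.
  have -> : (s - 1).+1 = s by lia.
  by rewrite add0r.
have ut : u t = gg v t by rewrite /u (gabove t.+1) ?addr0.
have Ms : `|gg v s| <= M by rewrite -us; apply: umax.
have Mt : `|gg v t| <= M by rewrite -ut; apply: umax.
have Mpos : 0 < M by apply: lt_le_trans Ms; rewrite normr_gt0.
have js : (s - 1 <= j)%N.
  case: leqP => // h; move: Mpos.
  have l1 : (j < s)%N by clear -h; lia.
  have l2 : (j.+1 < s)%N by clear -h s3; lia.
  by rewrite /M /u (gbelow j l1) (gbelow j.+1 l2) addr0 normr0 ltxx.
have jt : (j <= t)%N.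
  case: leqP => // h; move: Mpos.
  have l2 : (t < j.+1)%N by clear -h; lia.
  by rewrite /M /u (gabove j h) (gabove j.+1 l2) addr0 normr0 ltxx.
have p1 : pp a v (s - 3) = gg v s.
  have l1 : (s - 3 < s)%N by clear -s3; lia.
  have l2 : ((s - 3).+1 < s)%N by clear -s3; lia.
  have l3 : ((s - 3).+2 < s)%N by clear -s3; lia.
  have l4 : (s - 3).+3 = s by clear -s3; lia.
  rewrite /pp (gbelow _ l1) (gbelow _ l2) (gbelow _ l3) l4.
  by rewrite !mulr0 !add0r.
have p3 : pp a v t = gg v t.
  have l1 : (t < t.+1)%N by [].
  have l2 : (t < t.+2)%N by clear; lia.
  have l3 : (t < t.+3)%N by clear; lia.
  by rewrite /pp (gabove _ l1) (gabove _ l2) (gabove _ l3) !mulr0 !addr0.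
have p2 : pp a v (j - 1) = u (j - 1)%N + (a - 1) * u j + u j.+1.
  rewrite /pp /u.
  have -> : (j - 1).+1 = j by clear -js s3; lia.
  ring.
have a1 : 4 < `|a - 1|.
  have := ler_normD (a - 1) 1; rewrite subrK normr1 => h; lra.
have big2 : 2 * M < `|pp a v (j - 1)|.
  have h1 : `|a - 1| * M <= `|pp a v (j - 1)| + M + M.
    have -> : `|a - 1| * M = `|(a - 1) * u j| by rewrite normrM.
    have -> : (a - 1) * u j = pp a v (j - 1) - u (j - 1)%N - u j.+1
      by rewrite p2; ring.
    apply: le_trans (ler_normB _ _) _; apply: lerD; last exact: umax.
    apply: le_trans (ler_normB _ _) _; apply: lerD => //; exact: umax.
  have h2 : 4 * M < `|a - 1| * M by rewrite ltr_pM2r.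
  move: h1 h2; generalize (`|a - 1| * M) (`|pp a v (j - 1)|) M => X Y Z; lra.
have h1 : (s - 3 < n.+3)%N by clear -st tn; lia.
have h2 : (j - 1 < n.+3)%N by clear -jt tn; lia.
have h3 : (t < n.+3)%N by clear -tn; lia.
pose x1 : 'I_n.+3 := Ordinal h1.
pose x2 : 'I_n.+3 := Ordinal h2.
pose x3 : 'I_n.+3 := Ordinal h3.
have d12 : (x1 == x2) = false by apply/eqP => /(congr1 val) /=; clear -js s3; lia.
have d13 : (x1 == x3) = false by apply/eqP => /(congr1 val) /=; clear -st s3; lia.
have d23 : (x2 == x3) = false by apply/eqP => /(congr1 val) /=; clear -jt js s3; lia.
have nz1 : pp a v x1 != 0 by rewrite /= p1.
have nz2 : pp a v x2 != 0.
  by rewrite -normr_gt0; apply: le_lt_trans big2; rewrite mulr_ge0 // ltW.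
have nz3 : pp a v x3 != 0 by rewrite /= p3.
rewrite leqNgt; apply/negP => hS.
have zero : forall i : 'I_n.+3, i != x1 -> i != x2 -> i != x3 -> pp a v i = 0.
  move=> i n1 n2 n3; apply/eqP; apply: contraTT hS => pi; rewrite -leqNgt cardE.
  have -> : 4%N = size [:: x1; x2; x3; i] by [].
  apply: uniq_leq_size.
    rewrite /= !inE d12 d13 d23 !(eq_sym x1) !(eq_sym x2) !(eq_sym x3).
    by rewrite (negbTE n1) (negbTE n2) (negbTE n3).
  move=> y; rewrite !inE => /or4P [] /eqP ->; rewrite mem_enum inE Bv //.
have alt : \sum_(i < n.+3) (-1) ^+ i * pp a v i = 0.
  have E : forall i : nat, (-1) ^+ i * pp a v i =
     (-1) ^+ i * (u i + u i.+1) + (-1) ^+ i * (u i.+1 + u i.+2)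
     + (a - 3) * ((-1) ^+ i * (gg v i.+1 + gg v i.+2)).
    by move=> i; rewrite /pp /u; ring.
  rewrite (eq_bigr _ (fun (i : 'I_n.+3) _ => E i)) !big_split /= -mulr_sumr.
  have T1 := tele u n.+3.
  have T2 := tele (fun k => u k.+1) n.+3.
  have T3 := tele (fun k => gg v k.+1) n.+3.
  cbv beta in T2, T3.
  have gz : forall k, (n.+3 <= k)%N -> gg v k = 0.
    by move=> k hk; apply: g_ge; clear -hk; lia.
  have z0 : gg v 0%N = 0 by apply: g_lt3.
  have z1 : gg v 1%N = 0 by apply: g_lt3.
  have z2 : gg v 2%N = 0 by apply: g_lt3.
  have z3 : gg v n.+3 = 0 by apply: gz.
  have z4 : gg v n.+4 = 0 by apply: gz; clear; lia.
  have z5 : gg v n.+1.+4 = 0 by apply: gz; clear; lia.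
  rewrite T1 T2 T3 /u z0 z1 z2 z3 z4 z5.
  ring.
have alt2 : (-1) ^+ x1 * pp a v x1 + (-1) ^+ x2 * pp a v x2
            + (-1) ^+ x3 * pp a v x3 = 0.
  rewrite -alt.
  rewrite -(sum_pick x1 (fun i : 'I_n.+3 => (-1) ^+ i * pp a v i)).
  rewrite -(sum_pick x2 (fun i : 'I_n.+3 => (-1) ^+ i * pp a v i)).
  rewrite -(sum_pick x3 (fun i : 'I_n.+3 => (-1) ^+ i * pp a v i)).
  rewrite -!big_split /=; apply: eq_bigr => i _.
  have [->|n1] := eqVneq i x1.
    rewrite d12 d13 /=; ring.
  have [->|n2] := eqVneq i x2.
    rewrite d23 /=; ring.
  have [->|n3] := eqVneq i x3.
    rewrite /=; ring.
  rewrite zero //; ring.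
have : `|pp a v x2| <= `|gg v s| + `|gg v t|.
  rewrite -(normrMsign x2) -[X in `|X| <= _](addKr ((-1) ^+ x1 * pp a v x1 + (-1) ^+ x3 * pp a v x3)).
  have -> : (-1) ^+ x1 * pp a v x1 + (-1) ^+ x3 * pp a v x3 + (-1) ^+ x2 * pp a v x2 = 0.
    by rewrite -alt2; ring.
  rewrite addr0 normrN.
  apply: le_trans (ler_normD _ _) _.
  by rewrite !normrMsign /= p1 p3.
rewrite /= => hh.
move: hh big2 Ms Mt; generalize (`|pp a v (j - 1)|) (`|gg v s|) (`|gg v t|) M => X Y Z W; lra.
Qed.

Unset Implicit Arguments.

Theorem corollary5p4 (R : realType) (n : nat) (a : R) (ha : 5 < `|a|) :
  row_free (Btilde n a)^T /\
  (forall v : 'cV[R]_n, v != 0%R ->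
     (4 <= #|[set i : 'I_n.+3 | (Btilde n a *m v) i ord0 != 0%R]|)%N).
Proof.
split; last by move=> v; exact: part2.
rewrite -kermx_eq0; apply/eqP/row_matrixP => i; rewrite row0.
apply/eqP; apply: contraT => hi.
set w := row i (kermx (Btilde n a)^T).
have hw : w *m (Btilde n a)^T = 0 by apply/sub_kermxP; exact: row_sub.
have := part2 ha (v := w^T).
rewrite trmx_eq0 hi => /(_ isT).
have -> : Btilde n a *m w^T = (w *m (Btilde n a)^T)^T by rewrite trmx_mul trmxK.
rewrite hw trmx0.
have -> : [set k : 'I_n.+3 | (0 : 'M[R]_(n.+3, 1)) k ord0 != 0] = set0.
  by apply/setP => k; rewrite !inE mxE eqxx.
by rewrite cards0.
Qed.
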